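(* For every prime $p\ge 3$ we have $n(\mathbb{Z}_p) \le \frac{3p-1}{2}$.
   Context: For an integer $n\ge 1$, $\overleftrightarrow{K}_n$ denotes the complete digraph on $n$ vertices whose arc set consists of all ordered pairs $(x,y)$ of distinct vertices. For a set $A$, an $A$-arc-labelling of $\overleftrightarrow{K}_n$ is a function $w$ from the arc set of $\overleftrightarrow{K}_n$ to $A$. If $(A,+)$ is an Abelian group, $w$ is called zero-sum-free if there is no directed cycle (including directed cycles of length two) for which the sum of the arc-labels is $0$. For a non-trivial finite Abelian group $A$, $n(A)\ge 2$ is the smallest integer such that $\overleftrightarrow{K}_{n(A)}$ has no zero-sum-free $A$-arc-labelling. $\mathbb{Z}_p$ denotes the cyclic group of order $p$. *)

(* Defs.v *)
From mathcomp Require Import all_boot all_order all_algebra.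
Set Implicit Arguments. Unset Strict Implicit. Unset Printing Implicit Defensive.
Import GRing.Theory.
Local Open Scope ring_scope.

(* An A-arc-labelling of the complete digraph on vertex set 'I_n: the label
   of the arc (x,y), x <> y, is w x y (values w x x are irrelevant). *)
Definition arc_labelling (A : Type) (n : nat) := 'I_n -> 'I_n -> A.

(* A directed cycle is given by a duplicate-free sequence s = [v0;...;v_{k-1}]
   of k >= 2 vertices, with arcs v0->v1, ..., v_{k-2}->v_{k-1}, v_{k-1}->v0,
   i.e. the pairs of zip s (rot 1 s). *)
Definition cycle_weight (A : zmodType) (n : nat) (w : arc_labelling A n)
  (s : seq 'I_n) : A :=
  \sum_(e <- zip s (rot 1 s)) w e.1 e.2.

Definition zero_sum_free (A : zmodType) (n : nat) (w : arc_labelling A n) :=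
  forall s : seq 'I_n, (2 <= size s)%N -> uniq s -> cycle_weight w s != 0.

(* "n(A) <= m": since n(A) is the smallest integer >= 2 such that the complete
   digraph on n(A) vertices has no zero-sum-free A-arc-labelling, n(A) <= m
   holds iff some k with 2 <= k <= m has this property. *)
Definition nA_le (A : zmodType) (m : nat) :=
  exists k : nat, [/\ (2 <= k)%N, (k <= m)%N &
    forall w : arc_labelling A k, ~ zero_sum_free w].

(* Main.v *)
Require Import Defs.
From mathcomp Require Import all_boot all_order all_algebra.
From mathcomp Require Import ring zify.
Set Implicit Arguments. Unset Strict Implicit. Unset Printing Implicit Defensive.
Import GRing.Theory.
Local Open Scope ring_scope.

Lemma card_Zp_all p : (1 < p)%N -> #|[set: 'Z_p]| = p.
Proof. by move=> p1; rewrite cardsT card_ord Zp_cast. Qed.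

Lemma Zp_gen p (pp : prime p) (c y : 'Z_p) : c != 0 -> exists m, y = c *+ m.
Proof.
move=> c0; have p1 := prime_gt1 pp.
have cu : c \is a GRing.unit.
  have -> : c = (val c)%:R by rewrite natr_Zp.
  rewrite unitZpE // prime_coprime //; apply/negP=> Hd.
  have cp : (val c < p)%N.
    have := ltn_ord c; rewrite [X in (_ < X)%N -> _]Zp_cast //.
  case: (posnP (val c)) => [c0'|cpos]; last by have := dvdn_leq cpos Hd; lia.
  by move: c0; rewrite -val_eqE /= c0'.
exists (val (c^-1 * y)); rewrite -mulr_natr natr_Zp mulrA divrr // mul1r.
by [].
Qed.

Lemma Zp_inv_full p (pp : prime p) (A : {set 'Z_p}) (c a0 : 'Z_p) :
  c != 0 -> a0 \in A -> (forall a, a \in A -> a + c \in A) -> A = setT.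
Proof.
move=> c0 a0A hA; apply/setP=> x; rewrite inE.
have H : forall m, a0 + c *+ m \in A.
  by elim=> [|m IH]; rewrite ?mulr0n ?addr0 // mulrS addrCA addrC hA.
have [m hm] := Zp_gen pp (x - a0) c0.
by have := H m; rewrite -hm addrC subrK.
Qed.

Definition sumset p (A B : {set 'Z_p}) := [set a + b | a in A, b in B].

Lemma sumset_ge p (A B : {set 'Z_p}) b : b \in B -> (#|A| <= #|sumset A B|)%N.
Proof.
move=> bB; rewrite -(card_imset A (addIr b)); apply: subset_leq_card.
by apply/subsetP=> _ /imsetP[a aA ->]; apply/imset2P; exists a b.
Qed.

Lemma CD p (pp : prime p) n : forall (A B : {set 'Z_p}), #|B| = n -> A != set0 -> B != set0 ->
  (minn p (#|A| + #|B| - 1) <= #|sumset A B|)%N.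
Proof.
elim/ltn_ind: n => n IH A B cB An0 Bn0.
case/set0Pn: (Bn0) => b1 b1B.
case/set0Pn: (An0) => a1 a1A.
have geA := sumset_ge A b1B.
case: (leqP #|B| 1%N) => hB; first by lia.
have [b2 b2B b21] : exists2 b2, b2 \in B & b2 != b1.
  apply/exists_inP; apply: contraTT hB; rewrite negb_exists_in => /forall_inP H.
  rewrite -leqNgt; apply: leq_trans (_ : #|[set b1]| <= 1)%N; last by rewrite cards1.
  apply: subset_leq_card; apply/subsetP=> x xB; rewrite inE.
  by apply: contraTT (H x xB); rewrite negbK.
case: (boolP [exists a in A, exists x in B, exists y in B, y + (a - x) \notin A]).
- case/exists_inP=> a aA /exists_inP[x xB /exists_inP[y yB yn]].
  pose e := a - x.
  pose B' := [set z in B | z + e \in A].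
  pose I := [set z + e | z in B].
  pose A' := A :|: I.
  have xB' : x \in B' by rewrite inE xB /e addrC subrK.
  have yB' : y \notin B' by by rewrite inE yB /=.
  have ltB : (#|B'| < #|B|)%N.
    apply: proper_card; rewrite properEneq; apply/andP; split.
      by apply/eqP=> E; move: yB'; rewrite E yB.
    by apply/subsetP=> z; rewrite inE => /andP[].
  have cI : #|I| = #|B| by rewrite card_imset //; apply: addIr.
  have AI : A :&: I = [set z + e | z in B'].
    apply/setP=> t; rewrite inE; apply/andP/imsetP.
      by case=> tA /imsetP[z zB tz]; exists z => //; rewrite inE zB -tz.
    by case=> z; rewrite inE => /andP[zB zA] ->; split => //; apply: imset_f.
  have cAI : #|A :&: I| = #|B'| by rewrite AI card_imset //; apply: addIr.
  have cU := cardsUI A I.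
  have sub : sumset A' B' \subset sumset A B.
    apply/subsetP=> _ /imset2P[a' b' a'A b'B' ->].
    move: b'B'; rewrite inE => /andP[b'B b'A].
    move: a'A; rewrite inE => /orP[a'A|/imsetP[z zB ->]].
      by apply/imset2P; exists a' b'.
    apply/imset2P; exists (b' + e) z => //.
    by rewrite addrAC [RHS]addrAC [z + b']addrC.
  have A'n0 : A' != set0 by apply/set0Pn; exists a1; rewrite inE a1A.
  have B'n0 : B' != set0 by apply/set0Pn; exists x.
  have ltB' : (#|B'| < n)%N by rewrite -cB.
  have := IH _ ltB' A' B' erefl A'n0 B'n0.
  move/(leq_trans)/(_ (subset_leq_card sub)).
  have E : (#|A'| + #|B'| = #|A| + #|B|)%N by rewrite /A' -cAI -cI.
  by rewrite E.
- rewrite negb_exists_in => /forall_inP H.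
  have full : A = setT.
    apply: (Zp_inv_full pp (c := b2 - b1) (a0 := a1)) => //.
      by rewrite subr_eq0.
    move=> a aA; have := H a aA; rewrite negb_exists_in => /forall_inP/(_ b1 b1B).
    rewrite negb_exists_in => /forall_inP/(_ b2 b2B); rewrite negbK.
    by rewrite addrCA.
  have := geA; rewrite full card_Zp_all ?prime_gt1 //; lia.
Qed.
Fixpoint psum (A : zmodType) (T : Type) (w : T -> T -> A) (x : T) (t : seq T) : A :=
  match t with [::] => 0 | y :: t' => w x y + psum w y t' end.

Lemma psum_cat (A : zmodType) (T : Type) (w : T -> T -> A) x t1 t2 :
  psum w x (t1 ++ t2) = psum w x t1 + psum w (last x t1) t2.
Proof. by elim: t1 x => [|y t IH] x /=; rewrite ?add0r // IH addrA. Qed.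

Lemma zip_rcons_sum (A : zmodType) (T : Type) (w : T -> T -> A) x t z :
  \sum_(e <- zip (x :: t) (rcons t z)) w e.1 e.2 = psum w x t + w (last x t) z.
Proof.
elim: t x => [|y t IH] x /=; first by rewrite big_cons big_nil add0r addr0.
by rewrite big_cons IH addrA.
Qed.

Lemma cw_cons (A : zmodType) n (w : arc_labelling A n) x t :
  cycle_weight w (x :: t) = psum w x t + w (last x t) x.
Proof. by rewrite /cycle_weight rot1_cons zip_rcons_sum. Qed.

Definition good (R : zmodType) (x y : R) := [&& x != 0, y != 0 & x + y != 0].

Lemma tri (R : zmodType) (x1 x2 x3 : R) : (forall x : R, x + x = 0 -> x = 0) ->
  x1 + x2 + x3 != 0 -> ~~ ((x1 == 0) && (x2 == 0)) -> ~~ ((x2 == 0) && (x3 == 0)) ->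
  ~~ ((x3 == 0) && (x1 == 0)) -> [|| good x1 x2, good x2 x3 | good x3 x1].
Proof.
move=> h2; rewrite /good.
case: (eqVneq x1 0) => [->|n1]; case: (eqVneq x2 0) => [->|n2];
  case: (eqVneq x3 0) => [->|n3] //=; rewrite ?add0r ?addr0 ?eqxx //= => s0 _ _ _;
  rewrite ?s0 ?orbT ?n1 ?n2 ?n3 //=.
by rewrite addrC. apply/negPn/negP; rewrite !negb_or !negbK => /and3P[/eqP e12 /eqP e23 /eqP e31].
move/eqP: e12; rewrite addr_eq0 => /eqP e1.
move/eqP: e23; rewrite addr_eq0 => /eqP e2.
by move: e31; rewrite e1 e2 opprK => /h2 /eqP; rewrite (negbTE n3).
Qed.

Lemma nz2 (R : zmodType) (x y : R) : x + y != 0 -> ~~ ((x == 0) && (y == 0)).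
Proof. by apply: contraNN => /andP[/eqP -> /eqP ->]; rewrite addr0. Qed.

Lemma gadget (R : zmodType) (T : eqType) (y : T -> T -> R) (a b c : T) :
 (forall x : R, x + x = 0 -> x = 0) ->
 y a b + y b a != 0 -> y b c + y c b != 0 -> y c a + y a c != 0 ->
 y a b + y b c + y c a != 0 -> y a c + y c b + y b a != 0 ->
 exists2 o : T * T * T,
   o \in [:: (a, b, c); (b, c, a); (c, a, b); (a, c, b); (c, b, a); (b, a, c)] &
   good (y o.1.1 o.1.2) (y o.1.2 o.2).
Proof.
move=> h2 /nz2 N1 /nz2 N2 /nz2 N3 H3 H3'.
case: (boolP [&& ~~ ((y a b == 0) && (y b c == 0)), ~~ ((y b c == 0) && (y c a == 0))
   & ~~ ((y c a == 0) && (y a b == 0))]) => [/and3P[h h' h'']| hn].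
  have := tri h2 H3 h h' h''; case/or3P => g;
    [exists (a, b, c) | exists (b, c, a) | exists (c, a, b)] => //;
    by rewrite !inE eqxx ?orbT.
have [q1 q2 q3] : [/\ ~~ ((y a c == 0) && (y c b == 0)), ~~ ((y c b == 0) && (y b a == 0))
   & ~~ ((y b a == 0) && (y a c == 0))].
  move: hn N1 N2 N3.
  case: (y a b == 0); case: (y b c == 0); case: (y c a == 0);
  case: (y a c == 0); case: (y c b == 0); case: (y b a == 0) => //.
have := tri h2 H3' q1 q2 q3; case/or3P => g;
  [exists (a, c, b) | exists (c, b, a) | exists (b, a, c)] => //;
  by rewrite !inE eqxx ?orbT.
Qed.

Lemma L2 (R : comNzRingType) (d1 d2 x12 x21 : R) :
  (d1 + x12 - d2) + (d2 + x21 - d1) = x12 + x21.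
Proof. ring. Qed.

Lemma L3 (R : comNzRingType) (d1 d2 d3 x12 x23 x31 : R) :
  (d1 + x12 - d2) + (d2 + x23 - d3) + (d3 + x31 - d1) = x12 + x23 + x31.
Proof. ring. Qed.

Lemma Zp_h2 p (pp : prime p) (p3 : (3 <= p)%N) (x : 'Z_p) : x + x = 0 -> x = 0.
Proof.
move=> E; have p1 := prime_gt1 pp.
have u2 : (2%:R : 'Z_p) \is a GRing.unit.
  rewrite unitZpE // prime_coprime //; apply/negP => /dvdn_leq; lia.
by rewrite -(mulrK u2 x) mulr_natr mulr2n E mul0r.
Qed.

Lemma zsf2 (A : zmodType) n (w : arc_labelling A n) (i k : 'I_n) :
  zero_sum_free w -> i != k -> w i k + w k i != 0.
Proof.
move=> z ik; have := z [:: i; k] isT; rewrite /= inE ik cw_cons /= addr0.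
by apply.
Qed.

Lemma zsf3 (A : zmodType) n (w : arc_labelling A n) (i k l : 'I_n) :
  zero_sum_free w -> uniq [:: i; k; l] -> w i k + w k l + w l i != 0.
Proof.
move=> z u; have := z [:: i; k; l] isT u; rewrite cw_cons /= addr0 ?addrA.
by apply.
Qed.
Definition valid p n (w : 'I_n.+1 -> 'I_n.+1 -> 'Z_p) (j : nat) (e : 'I_n.+1) (t : seq 'I_n.+1) (z : 'Z_p) :=
  [/\ uniq (ord0 :: t), all (fun x : 'I_n.+1 => (x <= 3 * j)%N) t, last ord0 t = e & psum w ord0 t = z].

Lemma extend p n (w : 'I_n.+1 -> 'I_n.+1 -> 'Z_p) j e t z s e' :
  valid w j e t z -> uniq s -> all (fun x : 'I_n.+1 => (3 * j < x <= 3 * j + 3)%N) s ->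
  s != [::] -> last e s = e' -> valid w j.+1 e' (t ++ s) (z + psum w e s).
Proof.
case=> ut at_ le pz us as_ sn ls; split.
- rewrite -cat_cons cat_uniq ut us andbT /=.
  apply/hasPn => x xs; move/allP: as_ => /(_ x xs) /andP[h1 _].
  rewrite inE negb_or; apply/andP; split.
    by apply/eqP => ex; move: h1; rewrite ex.
  apply/negP => xt; move/allP: at_ => /(_ x xt); lia.
- rewrite all_cat; apply/andP; split.
    by apply: sub_all at_ => x /=; lia.
  by apply: sub_all as_ => x /=; lia.
- by rewrite last_cat le.
- by rewrite psum_cat le pz.
Qed.

Lemma L4 (R : comNzRingType) (d1 d2 x12 x2e de : R) :
  (d1 + x12 + x2e) - (d2 + x2e) = d1 + x12 - d2.
Proof. ring. Qed.

Lemma L5 (R : comNzRingType) (d1 d2 x12 x2e de : R) :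
  (d1 + x12 + x2e) - de = (d1 + x12 - d2) + (d2 + x2e - de).
Proof. ring. Qed.

Lemma chain p n (pp : prime p) (p3 : (3 <= p)%N)
  (w : arc_labelling [the zmodType of 'Z_p] n.+1) (zsf : zero_sum_free w) j :
  (3 * j <= n)%N -> exists e : 'I_n.+1, exists T : {set 'Z_p},
  [/\ (e <= 3 * j)%N, (0 < j)%N -> (0 < e)%N, (minn p (2 * j + 1) <= #|T|)%N &
      forall z, z \in T -> exists t, valid w j e t z].
Proof.
elim: j => [|j IH] hj.
  exists ord0, [set 0]; split => //; first by rewrite cards1; lia.
  by move=> z; rewrite inE => /eqP ->; exists [::].
have hj' : (3 * j <= n)%N by lia.
have [e [T [le _ cT hT]]] := IH hj'.
pose a : 'I_n.+1 := inord (3 * j + 1).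
pose b : 'I_n.+1 := inord (3 * j + 2).
pose c : 'I_n.+1 := inord (3 * j + 3).
have va : (a : nat) = (3 * j + 1)%N by rewrite /a inordK //; lia.
have vb : (b : nat) = (3 * j + 2)%N by rewrite /b inordK //; lia.
have vc : (c : nat) = (3 * j + 3)%N by rewrite /c inordK //; lia.
pose y i k := w e i + w i k - w e k.
have d2 : forall i k : 'I_n.+1, i != k -> y i k + y k i != 0.
  by move=> i k ik; rewrite /y L2; apply: zsf2.
have d3 : forall i k l : 'I_n.+1, uniq [:: i; k; l] -> y i k + y k l + y l i != 0.
  by move=> i k l u; rewrite /y L3; apply: zsf3.
have nab : a != b by rewrite -val_eqE /= va vb; apply/eqP; lia.
have nbc : b != c by rewrite -val_eqE /= vb vc; apply/eqP; lia.
have nca : c != a by rewrite -val_eqE /= vc va; apply/eqP; lia.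
have uabc : uniq [:: a; b; c] by rewrite /= !inE negb_or nab nbc eq_sym nca.
have uacb : uniq [:: a; c; b] by rewrite /= !inE negb_or eq_sym nca nab eq_sym nbc.
have [[[o1 o2] e'] Hin Hg] := gadget (y := y) (Zp_h2 pp p3) (d2 _ _ nab) (d2 _ _ nbc)
   (d2 _ _ nca) (d3 _ _ _ uabc) (d3 _ _ _ uacb).
pose rng := fun x : 'I_n.+1 => (3 * j < x <= 3 * j + 3)%N.
have [uo ro] : uniq [:: o1; o2; e'] /\ all rng [:: o1; o2; e'].
  have ra : rng a by rewrite /rng va; lia.
  have rb : rng b by rewrite /rng vb; lia.
  have rc : rng c by rewrite /rng vc; lia.
  move: Hin; rewrite !inE !xpair_eqE.
  case/orP => [H|/orP[H|/orP[H|/orP[H|/orP[H|H]]]]];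
    move: H => /andP[/andP[/eqP -> /eqP ->] /eqP ->];
    (split; [by rewrite /= !inE -!val_eqE /= va vb vc !eqn_add2l | by rewrite /= ra rb rc]).
move: Hg; rewrite /good /= => /and3P[g1 g2 g3].
pose V1 := w e e'.
pose V2 := w e o2 + w o2 e'.
pose V3 := w e o1 + w o1 o2 + w o2 e'.
have n12 : V1 != V2 by rewrite eq_sym -subr_eq0.
have n23 : V2 != V3 by rewrite eq_sym -subr_eq0 /V3 /V2 L4.
have n13 : V1 != V3 by rewrite eq_sym -subr_eq0 /V3 /V1 (L5 _ (w e o2)).
pose B := [set V1; V2; V3].
have cB : #|B| = 3%N.
  rewrite /B -setUA cardsU1 cards2 n23 !inE negb_or n12 n13.
  by [].
have Tn0 : T != set0.
  rewrite -card_gt0; move: cT p3; clear; lia.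
have Bn0 : B != set0 by rewrite -card_gt0 cB.
have re : rng e' by apply: (allP ro); rewrite !inE eqxx !orbT.
move: re; rewrite /rng => re.
exists e'; exists (@sumset p T B); split.
- by move: re; move: (e' : nat) => x; clear; lia.
- by move=> _; move: re; move: (e' : nat) => x; clear; lia.
- have := CD pp erefl Tn0 Bn0; rewrite cB; move: cT; move: #|T| #|sumset T B| => x0 y0.
  clear; lia.
move=> z /imset2P[z1 v z1T vB ->].
have [t vt] := hT z1 z1T.
have ro2 : all rng [:: o2; e'] by move: ro => /andP[].
have ro3 : all rng [:: e'] by move: ro2 => /andP[].
have uo2 : uniq [:: o2; e'] by move: uo => /andP[].
move: vB; rewrite !inE => /orP[/orP[]|] /eqP ->.
- exists (t ++ [:: e']).
  have := extend vt (isT : uniq [:: e']) ro3 isT erefl.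
  by rewrite /= addr0.
- exists (t ++ [:: o2; e']).
  have := extend vt uo2 ro2 isT erefl.
  by rewrite /= addr0.
- exists (t ++ [:: o1; o2; e']).
  have := extend vt uo ro isT erefl.
  by rewrite /= addr0 !addrA.
Qed.
Lemma nofree p n (pp : prime p) (p3 : (3 <= p)%N)
  (w : arc_labelling [the zmodType of 'Z_p] n.+1) :
  (3 * p./2 <= n)%N -> ~ zero_sum_free w.
Proof.
move=> hn zsf.
have [e [T [le epos cT hT]]] := chain pp p3 zsf hn.
have po : odd p by case: (even_prime pp) => // p2; move: p3; rewrite p2.
have hp := odd_double_half p; rewrite po in hp.
have k0 : (0 < p./2)%N by move: hp p3; clear; lia.
have cT' : (p <= #|T|)%N by move: cT hp; clear; lia.
have fullT : T = setT.
  apply/eqP; rewrite eqEcard subsetT card_Zp_all ?prime_gt1 //.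
have inT : - w e ord0 \in T by rewrite fullT inE.
have [t [ut _ lt pz]] := hT _ inT.
have tn : t != [::].
  apply/eqP => t0; move: lt (epos k0); rewrite t0 /= => <-; by [].
have sz : (2 <= size (ord0 :: t))%N by case: t tn {ut lt pz inT}.
have := zsf (ord0 :: t) sz ut.
by rewrite cw_cons lt pz addNr eqxx.
Qed.

Theorem theorem2 (p : nat) : prime p -> (3 <= p)%N ->
  nA_le [the zmodType of 'Z_p] ((3 * p - 1) %/ 2).
Proof.
move=> pp p3.
have po : odd p by case: (even_prime pp) => // p2; move: p3; rewrite p2.
have hp := odd_double_half p; rewrite po in hp.
exists (3 * p./2).+1; split.
- by move: hp p3; clear; lia.
- by move: hp p3; clear; lia.
- by move=> w; apply: nofree.
Qed.
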